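(* For $n\geqslant1$ and $m,f\geqslant0$, let $\mathfrak{i}_{n,m,f}$ be the number of inversion sequences $\sigma$ of length $n$ avoiding both $010$ and $210$, with maximum value $m$ and $\mathrm{forb}(\sigma,\{010,210\})=f$. Then for all $n\geqslant 1$, $m\geqslant 1$ and $0\leqslant f\leqslant m+1$, $$\mathfrak{i}_{n,m,f}=\sum_{p=m+1}^{n}\sum_{i=0}^{f-1}\sum_{j=0}^{m-1}\mathfrak{i}_{p-1,j,i}\cdot\mathfrak{h}_{n-p,\,f-i-1},$$ where $\mathfrak{h}_{a,b}$ is the number of words of length $a$ over $\{1,\dots,b\}\sqcup\{\infty\}$ ($\infty$ the largest letter) avoiding $010$ whose subword obtained by deleting the letters $\infty$ is nondecreasing with maximum $b$ (or is empty, when $b=0$); in particular $\mathfrak{h}_{0,0}=1$ and $\mathfrak{h}_{0,b}=0$ for $b\geqslant1$.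
   Context: An inversion sequence of length $n$ is a sequence $(\sigma_1,\dots,\sigma_n)$ of integers with $0\leqslant\sigma_i<i$. A sequence contains a pattern $p$ if some subsequence is order-isomorphic to $p$; otherwise it avoids $p$. Avoiding $010$: no $i<j<l$ with $\sigma_i=\sigma_l<\sigma_j$. Avoiding $210$: no $i<j<l$ with $\sigma_i>\sigma_j>\sigma_l$. For a sequence $\sigma$ avoiding a set of patterns $P$, a value $v\in\{0,\dots,\max(\sigma)\}$ is forbidden if the sequence $\sigma$ followed by $M$ and then $v$ contains some pattern of $P$, where $M>\max(\sigma)$; $\mathrm{forb}(\sigma,P)$ is the number of forbidden values. *)

(* Defs.v *)
From mathcomp Require Import all_boot.
Set Implicit Arguments. Unset Strict Implicit. Unset Printing Implicit Defensive.

(* Inversion sequence: position k (0-indexed, i.e. sigma_{k+1}) has value < k+1. *)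
Definition is_invseq (s : seq nat) : bool :=
  [forall k : 'I_(size s), nth 0 s k < k.+1].

Definition contains010 (s : seq nat) : bool :=
  [exists i : 'I_(size s), exists j : 'I_(size s), exists l : 'I_(size s),
     [&& i < j, j < l, nth 0 s i == nth 0 s l & nth 0 s i < nth 0 s j]].

Definition contains210 (s : seq nat) : bool :=
  [exists i : 'I_(size s), exists j : 'I_(size s), exists l : 'I_(size s),
     [&& i < j, j < l, nth 0 s j < nth 0 s i & nth 0 s l < nth 0 s j]].

Definition avoids_P (s : seq nat) : bool := ~~ contains010 s && ~~ contains210 s.

(* maximum value (0 for the empty sequence) *)
Definition seqmax (s : seq nat) : nat := \max_(x <- s) x.

(* forb(s, {010,210}): number of v in {0..max s} such that s M v contains a
   pattern of P, with M := max s + 1 > max s. *)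
Definition forb (s : seq nat) : nat :=
  count (fun v => ~~ avoids_P (s ++ [:: (seqmax s).+1; v])) (iota 0 (seqmax s).+1).

(* i_{n,m,f}: inversion sequences of length n have all values < n, so they
   are exactly the value-sequences of suitable n-tuples over 'I_n. *)
Definition i_count (n m f : nat) : nat :=
  #|[set t : n.-tuple 'I_n |
      [&& is_invseq (map val t), avoids_P (map val t),
          seqmax (map val t) == m & forb (map val t) == f]]|.

(* h_{a,b}: words of length a over {1,...,b} ⊔ {∞}; the letter ∞ is encoded
   as the natural number b+1 (the largest letter), so words are a-tuples of
   values in {1,...,b+1} ⊆ 'I_(b+2). *)
Definition h_count (a b : nat) : nat :=
  #|[set t : a.-tuple 'I_(b.+2) |
      let w := map val t in
      let u := filter (fun x => x <= b) w in
      [&& all (fun x => 0 < x) w, ~~ contains010 w, sorted leq u &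
          ((u != [::]) && (seqmax u == b)) || ((u == [::]) && (b == 0))]]|.

(* Main.v *)
Require Import Defs.
From mathcomp Require Import all_boot.
From Stdlib Require Import Btauto.
From mathcomp Require Import zify.
Set Implicit Arguments. Unset Strict Implicit. Unset Printing Implicit Defensive.

Fixpoint pairs (Q : nat -> nat -> bool) (s : seq nat) : bool :=
  if s is x :: s' then has (Q x) s' || pairs Q s' else false.
Fixpoint tri (P : nat -> nat -> nat -> bool) (s : seq nat) : bool :=
  if s is x :: s' then pairs (P x) s' || tri P s' else false.

Lemma pairsP (Q : nat -> nat -> bool) s :
  reflect (exists i j, [/\ i < j, j < size s & Q (nth 0 s i) (nth 0 s j)])
          (pairs Q s).
Proof.
elim: s => [|x s IH] /=; first by apply: ReflectF => [[i [j [_ H _]]]].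
apply: (iffP orP).
- case=> [/(has_nthP 0) [j Hj HQ]|/IH [i [j [Hij Hj HQ]]]].
  + by exists 0, j.+1.
  + by exists i.+1, j.+1.
- case=> [[|i] [[|j] [//= Hij Hj HQ]]].
  + by left; apply/(has_nthP 0); exists j.
  + by right; apply/IH; exists i, j.
Qed.

Lemma triP (P : nat -> nat -> nat -> bool) s :
  reflect (exists i j l, [/\ i < j, j < l, l < size s &
                   P (nth 0 s i) (nth 0 s j) (nth 0 s l)])
          (tri P s).
Proof.
elim: s => [|x s IH] /=; first by apply: ReflectF => [[i [j [l [_ _ H _]]]]].
apply: (iffP orP).
- case=> [/pairsP [j [l [Hjl Hl HP]]]|/IH [i [j [l [Hij Hjl Hl HP]]]]].
  + by exists 0, j.+1, l.+1.
  + by exists i.+1, j.+1, l.+1.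
- case=> [[|i] [[|j] [[|l] [//= Hij Hjl Hl HP]]]].
  + by left; apply/pairsP; exists j, l.
  + by right; apply/IH; exists i, j, l.
Qed.

Lemma ord3E (P : nat -> nat -> nat -> bool) s :
  [exists i : 'I_(size s), exists j : 'I_(size s), exists l : 'I_(size s),
     [&& i < j, j < l & P (nth 0 s i) (nth 0 s j) (nth 0 s l)]] = tri P s.
Proof.
apply/existsP/triP.
- case=> i /existsP [j /existsP [l /and3P [H1 H2 H3]]].
  by exists i, j, l; split.
- case=> i [j [l [H1 H2 H3 H4]]].
  have Hj : j < size s by apply: ltn_trans H3.
  have Hi : i < size s by apply: ltn_trans Hj.
  exists (Ordinal Hi); apply/existsP; exists (Ordinal Hj); apply/existsP.
  by exists (Ordinal H3); apply/and3P.
Qed.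

Definition P010 (a b c : nat) := (a == c) && (a < b).
Definition P210 (a b c : nat) := (b < a) && (c < b).

Lemma c010E s : contains010 s = tri P010 s.
Proof. exact: (ord3E P010 s). Qed.
Lemma c210E s : contains210 s = tri P210 s.
Proof. exact: (ord3E P210 s). Qed.

Lemma pairs_cat (Q : nat -> nat -> bool) s1 s2 :
  pairs Q (s1 ++ s2) = [|| pairs Q s1, has (fun a => has (Q a) s2) s1 | pairs Q s2].
Proof.
elim: s1 => [|x s1 IH] //=; rewrite has_cat IH.
by btauto.
Qed.

Lemma tri_cat (P : nat -> nat -> nat -> bool) s1 s2 :
  tri P (s1 ++ s2) = [|| tri P s1, pairs (fun a b => has (P a b) s2) s1,
                        has (fun a => pairs (P a) s2) s1 | tri P s2].
Proof.
elim: s1 => [|x s1 IH] //=; rewrite pairs_cat IH.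
by btauto.
Qed.

Lemma eq_in_pairs (Q Q' : nat -> nat -> bool) s : {in s &, Q =2 Q'} -> pairs Q s = pairs Q' s.
Proof.
elim: s => [|x s IH] //= H; congr orb.
  apply: eq_in_has => y Hy; apply: H; rewrite inE ?Hy ?eqxx ?orbT //.
apply: IH => a b Ha Hb; apply: H; by rewrite inE ?Ha ?Hb orbT.
Qed.

Lemma eq_in_tri (P P' : nat -> nat -> nat -> bool) s : (forall a b c, a \in s -> b \in s -> c \in s -> P a b c = P' a b c) ->
  tri P s = tri P' s.
Proof.
elim: s => [|x s IH] //= H; congr orb.
  apply: eq_in_pairs => y z Hy Hz; apply: H; rewrite inE ?Hy ?Hz ?eqxx ?orbT //.
apply: IH => a b c Ha Hb Hc; apply: H; by rewrite inE ?Ha ?Hb ?Hc orbT.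
Qed.

Lemma pairs_map (Q : nat -> nat -> bool) (f : nat -> nat) s : pairs Q (map f s) = pairs (fun a b => Q (f a) (f b)) s.
Proof. by elim: s => [|x s IH] //=; rewrite has_map IH. Qed.

Lemma tri_map (P : nat -> nat -> nat -> bool) (f : nat -> nat) s : tri P (map f s) = tri (fun a b c => P (f a) (f b) (f c)) s.
Proof. by elim: s => [|x s IH] //=; rewrite pairs_map IH. Qed.

Lemma has_swap (R : nat -> nat -> bool) s1 s2 :
  has (fun a => has (R a) s2) s1 = has (fun b => has (R^~ b) s1) s2.
Proof.
apply/hasP/hasP => [[a Ha /hasP [b Hb HR]]|[b Hb /hasP [a Ha HR]]].
  by exists b => //; apply/hasP; exists a.
by exists a => //; apply/hasP; exists b.
Qed.

Lemma pairs_has_swap (R : nat -> nat -> nat -> bool) t w :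
  pairs (fun a b => has (R a b) w) t = has (fun c => pairs (fun a b => R a b c) t) w.
Proof.
elim: t => [|x t IH] /=; first by rewrite has_pred0.
rewrite IH has_swap -has_predU; apply: eq_has => c //.
Qed.

Definition ib (t : seq nat) (c : nat) := pairs (fun a b => (b < a) && (c < b)) t.
Definition badv (t : seq nat) (c : nat) := (c \in t) || ib t c.
Definition Dm (m b c : nat) := (b < m) && (c < b).

Lemma nth_in (s : seq nat) i : i < size s -> nth 0 s i \in s.
Proof. exact: mem_nth. Qed.

Lemma hasmemC (s1 s2 : seq nat) :
  has (fun c => c \in s2) s1 = has (fun c => c \in s1) s2.
Proof. exact: has_sym. Qed.

Lemma c010_split t m w : all (fun x => x < m) t -> all (fun x => x <= m) w ->
  tri P010 (t ++ m :: w) = [|| tri P010 t, tri P010 w | has (fun c => c \in t) w].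
Proof.
move=> /allP Ht /allP Hw.
rewrite tri_cat /=.
have -> : pairs (P010 m) w = false.
  apply/pairsP => -[i [j [Hij Hj /andP [_ Hm]]]].
  have := Hw _ (nth_in (ltn_trans Hij Hj)); by rewrite leqNgt Hm.
have -> : has (fun a => pairs (P010 a) (m :: w)) t = has (fun c => c \in w) t.
  apply: eq_in_has => a Ha /=.
  have Ham := Ht _ Ha.
  have -> : has (P010 a m) w = (a \in w).
    rewrite /P010 Ham; apply/hasP/idP => [[c Hc /andP [/eqP -> _]] //|Haw].
    by exists a; rewrite ?eqxx.
  apply/orP/idP => [[//|/pairsP [i [j [Hij Hj /andP [/eqP -> _]]]]]|->]; last by left.
  exact: nth_in.
have H1 : pairs (fun a b => has (P010 a b) (m :: w)) t -> has (fun c => c \in w) t.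
  move=> /pairsP [i [j [Hij Hj /hasP [c Hc /andP [/eqP Hac _]]]]].
  have Hit : nth 0 t i \in t by apply: nth_in; apply: ltn_trans Hj.
  apply/hasP; exists (nth 0 t i) => //.
  move: Hc; rewrite inE -Hac => /orP [/eqP Hm|//].
  by have := Ht _ Hit; rewrite Hm ltnn.
case: (pairs _ t) H1 => [H1|_]; first by rewrite H1 // !orbT -hasmemC (H1 isT) !orbT.
rewrite hasmemC; case: (tri P010 t) => //=; case: (tri P010 w); by rewrite /= ?orbT ?orbF.
Qed.

Lemma c210_split t m w : all (fun x => x < m) t -> all (fun x => x <= m) w ->
  tri P210 (t ++ m :: w) = [|| tri P210 t, has (ib t) w | pairs (Dm m) w].
Proof.
move=> /allP Ht /allP Hw.
rewrite tri_cat /=.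
have E1 : pairs (fun a b => has (P210 a b) (m :: w)) t = has (ib t) w.
  rewrite -pairs_has_swap; apply: eq_in_pairs => a b Ha Hb /=.
  rewrite /P210; have := Ht _ Hb.
  case: (ltnP m b) => [Hmb|_ _]; first by rewrite ltnNge ltnW.
  by rewrite andbF.
have E2 : has (fun a => pairs (P210 a) (m :: w)) t -> pairs (Dm m) w.
  move=> /hasP [a Ha] /=; rewrite {1}/P210.
  have Ham := Ht _ Ha.
  case/orP => [/hasP [c _ /andP [Hma _]]|/pairsP [i [j [Hij Hj /andP [H1 H2]]]]].
    by move: Hma; rewrite ltnNge ltnW.
  by apply/pairsP; exists i, j; split => //; rewrite /Dm H2 (ltn_trans H1 Ham).
have E3 : tri P210 w -> pairs (Dm m) w.
  move=> /triP [i [j [l [Hij Hjl Hl /andP [H1 H2]]]]].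
  apply/pairsP; exists j, l; split => //; rewrite /Dm H2 andbT.
  apply: (leq_trans H1); apply: Hw; apply: nth_in.
  exact: ltn_trans Hij (ltn_trans Hjl Hl).
have -> : pairs (P210 m) w || tri P210 w = pairs (Dm m) w.
  rewrite (_ : pairs (P210 m) w = pairs (Dm m) w).
    by case: (tri P210 w) E3 => [H|_]; rewrite ?H ?orbT ?orbF.
  apply: eq_in_pairs => b c Hb Hc; by rewrite /P210 /Dm.
rewrite E1.
case: (has _ t) E2 => [H|_]; first by rewrite H // !orbT.
by case: (tri P210 t); case: (has (ib t) w); rewrite /= ?orbT ?orbF.
Qed.

Lemma seqmax_nil : seqmax [::] = 0.
Proof. by rewrite /seqmax big_nil. Qed.
Lemma seqmax_cons x s : seqmax (x :: s) = maxn x (seqmax s).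
Proof. by rewrite /seqmax big_cons. Qed.
Lemma seqmax_cat s1 s2 : seqmax (s1 ++ s2) = maxn (seqmax s1) (seqmax s2).
Proof. by rewrite /seqmax big_cat. Qed.
Lemma seqmax_le k s : (seqmax s <= k) = all (fun x => x <= k) s.
Proof.
elim: s => [|x s IH]; first by rewrite seqmax_nil.
by rewrite seqmax_cons geq_max IH.
Qed.
Lemma mem_le_seqmax x s : x \in s -> x <= seqmax s.
Proof.
elim: s => [|y s IH] //; rewrite inE seqmax_cons => /orP [/eqP ->|H].
  exact: leq_maxl.
by apply: leq_trans (IH H) (leq_maxr _ _).
Qed.
Lemma seqmax_mem s : 0 < seqmax s -> seqmax s \in s.
Proof.
elim: s => [|y s IH]; first by rewrite seqmax_nil.
rewrite seqmax_cons inE; case: (leqP (seqmax s) y) => H.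
  by rewrite eqxx.
by move=> /IH ->; rewrite orbT.
Qed.

Lemma all_notbadv t w :
  all (fun c => ~~ badv t c) w = ~~ has (fun c => c \in t) w && ~~ has (ib t) w.
Proof.
elim: w => [|x w IH] //=; rewrite IH /badv.
by case: (x \in t); case: (ib t x); case: (has (ib t) w); case: (has _ w).
Qed.

Lemma avoids_split t m w : all (fun x => x < m) t -> all (fun x => x <= m) w ->
  avoids_P (t ++ m :: w) =
  avoids_P t && [&& ~~ tri P010 w, ~~ pairs (Dm m) w & all (fun c => ~~ badv t c) w].
Proof.
move=> Ht Hw; rewrite /avoids_P !c010E !c210E c010_split // c210_split //.
rewrite all_notbadv.
case: (tri P010 t); case: (tri P210 t); case: (tri P010 w); case: (pairs (Dm m) w);
  case: (has (ib t) w); by case: (has _ w).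
Qed.

Lemma badv_le s v : badv s v -> v <= seqmax s.
Proof.
case/orP => [/mem_le_seqmax //|/pairsP [i [j [Hij Hj /andP [_ H]]]]].
apply: ltnW; apply: (leq_trans H); apply: mem_le_seqmax; exact: nth_in.
Qed.

Lemma forbE s : avoids_P s -> forb s = count (badv s) (iota 0 (seqmax s).+1).
Proof.
move=> Hs; rewrite /forb; apply: eq_in_count => v; rewrite mem_iota add0n => Hv.
rewrite avoids_split ?Hs //=; last by rewrite (ltnW Hv).
  by rewrite andbT negbK.
by apply/allP => x /mem_le_seqmax.
Qed.

Lemma count_iota_ext (p : pred nat) B K : (forall x, p x -> x < B) -> B <= K ->
  count p (iota 0 K) = count p (iota 0 B).
Proof.
move=> Hp HBK; rewrite -(subnKC HBK) iotaD count_cat.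
rewrite (@eq_in_count _ p pred0 (iota (0 + B) (K - B))) ?count_pred0 ?addn0 // => x.
rewrite mem_iota add0n => /andP [Hx _] /=; apply/negP => /Hp; by rewrite ltnNge Hx.
Qed.

Lemma forbE2 s K : avoids_P s -> seqmax s < K -> forb s = count (badv s) (iota 0 K).
Proof.
move=> Hs HK; rewrite forbE //; symmetry; apply: count_iota_ext => // x /badv_le.
by rewrite ltnS.
Qed.

Lemma badv_split t m w v : all (fun x => x < m) t -> all (fun x => x <= m) w -> v <= m ->
  badv (t ++ m :: w) v = [|| badv t v, v == m | has (fun x => (v <= x) && (x < m)) w].
Proof.
move=> /allP Ht /allP Hw Hvm.
rewrite /badv /ib pairs_cat mem_cat inE /=.
apply/idP/idP.
- have G : forall x, x \in w -> v <= x < m -> has (fun x : nat => v <= x < m) w.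
    by move=> x Hx Hvx; apply/hasP; exists x.
  move=> /orP [/or3P [Hv|Hv|Hv]|/orP [H|/orP [H|/orP [H|H]]]].
  + by rewrite Hv.
  + by rewrite Hv orbT.
  + have [->|Hne] := eqVneq v m; first by rewrite ?eqxx orbT.
    by apply/orP; right; apply/orP; right; apply: (G v) => //; rewrite leqnn ltn_neqAle Hne Hvm.
  + by rewrite H !orbT.
  + case/hasP: H => a Ha /orP [/andP [Hma _]|/hasP [b Hb /andP [Hba Hvb]]].
      by have := Ht _ Ha; rewrite ltnNge (ltnW Hma).
    by apply/orP; right; apply/orP; right; apply: (G b) => //; rewrite (ltnW Hvb) (ltn_trans Hba (Ht _ Ha)).
  + case/hasP: H => b Hb /andP [Hbm Hvb].
    by apply/orP; right; apply/orP; right; apply: (G b) => //; rewrite (ltnW Hvb).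
  + case/pairsP: H => i [j [Hij Hj /andP [Hji Hvj]]].
    apply/orP; right; apply/orP; right; apply: (G (nth 0 w j)); first exact: nth_in.
    rewrite (ltnW Hvj) /=; apply: (leq_trans Hji); apply: Hw; apply: nth_in.
    exact: ltn_trans Hj.
- move=> /orP [/orP [H|H]|/orP [H|/hasP [x Hx /andP [Hvx Hxm]]]].
  + by rewrite H.
  + by rewrite H !orbT.
  + by rewrite H !orbT.
  + case: (ltngtP v x) Hvx => [Hvx' _||Heq _]; last by rewrite Heq Hx !orbT.
      apply/orP; right; apply/orP; right; apply/orP; right; apply/orP; left.
      by apply/hasP; exists x; rewrite ?Hxm.
    by rewrite ltnNge.
Qed.

Lemma count_or (a b : pred nat) s :
  count (fun x => a x || b x) s = count a s + count (fun x => ~~ a x && b x) s.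
Proof.
elim: s => [|x s IH] //=; rewrite IH.
by case: (a x); case: (b x) => /=; lia.
Qed.

Definition Aset t m := filter (fun v => ~~ badv t v) (iota 0 m).
Definition Ew m w v := has (fun x => (v <= x) && (x < m)) w.

Lemma forb_split t m w : 0 < m -> all (fun x => x < m) t -> all (fun x => x <= m) w ->
  avoids_P t -> avoids_P (t ++ m :: w) ->
  forb (t ++ m :: w) = forb t + 1 + count (Ew m w) (Aset t m).
Proof.
move=> Hm Ht Hw Hat Has.
have Hmax : seqmax (t ++ m :: w) = m.
  have H1 : all (fun x => x <= m) t.
    by apply/allP => x Hx; apply: ltnW; exact: (allP Ht).
  have H2 : m <= seqmax (t ++ m :: w).
    by apply: mem_le_seqmax; rewrite mem_cat inE eqxx orbT.
  apply/eqP; rewrite eqn_leq H2 andbT seqmax_le all_cat /= leqnn Hw H1.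
  done.
rewrite forbE // Hmax -addn1 iotaD count_cat /= add0n.
have -> : badv (t ++ m :: w) m by rewrite /badv mem_cat inE eqxx orbT.
rewrite addn0.
rewrite (@eq_in_count _ _ (fun v => badv t v || Ew m w v)); last first.
  move=> v; rewrite mem_iota add0n => Hv.
  by rewrite badv_split // ?(ltnW Hv) // (ltn_eqF Hv).
rewrite count_or (@forbE2 t m) //; last first.
  case: (t) Ht => [|x t'] Ht'; first by rewrite seqmax_nil.
  rewrite -(prednK Hm) ltnS seqmax_le; apply/allP => y Hy.
  by rewrite -ltnS (prednK Hm) (allP Ht').
rewrite /Aset count_filter.
have -> : count (predI (Ew m w) (fun v => ~~ badv t v)) (iota 0 m)
   = count (fun x => ~~ badv t x && Ew m w x) (iota 0 m).
  by apply: eq_count => x /=; rewrite andbC.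
by rewrite addnAC.
Qed.

Fixpoint invf k (s : seq nat) : bool :=
  if s is x :: s' then (x <= k) && invf k.+1 s' else true.

Lemma invfP k s : reflect (forall i, i < size s -> nth 0 s i <= k + i) (invf k s).
Proof.
elim: s k => [|x s IH] k /=; first by apply: ReflectT.
apply: (iffP andP) => [[Hx /IH H] [|i] //=|H]; first by rewrite addn0.
  by move=> Hi; rewrite addnS -addSn; apply: H.
split; first by have := H 0 isT; rewrite addn0.
apply/IH => i Hi; rewrite addSn -addnS; exact: (H i.+1).
Qed.

Lemma invseqE s : is_invseq s = invf 0 s.
Proof.
apply/forallP/invfP => [H i Hi|H i]; first by have := H (Ordinal Hi).
by rewrite ltnS; apply: H.
Qed.

Lemma invf_cat k s1 s2 : invf k (s1 ++ s2) = invf k s1 && invf (k + size s1) s2.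
Proof.
elim: s1 k => [|x s1 IH] k /=; first by rewrite addn0.
by rewrite IH addSnnS andbA.
Qed.

Lemma invf_all k s : all (fun x => x <= k) s -> invf k s.
Proof.
elim: s k => [|x s IH] k //= /andP [-> H] /=; apply: IH.
by apply/allP => y Hy; apply: leqW; exact: (allP H).
Qed.

Lemma invf_bound k s : invf k s -> all (fun x => x < k + size s) s.
Proof.
elim: s k => [|x s IH] k //= /andP [Hx /IH H]; apply/andP; split.
  by rewrite addnS ltnS (leq_trans Hx) ?leq_addr.
by rewrite addnS -addSn.
Qed.

Lemma countE (T : Type) (P : pred T) s : count P s = \sum_(x <- s) (P x : nat).
Proof. by elim: s => [|x s IH]; rewrite ?big_nil ?big_cons //= IH. Qed.

Fixpoint words k N : seq (seq nat) :=
  if k is k'.+1 then [seq x :: s | x <- iota 0 N, s <- words k' N] else [:: [::]].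

Lemma mem_words k N s : (s \in words k N) = (size s == k) && all (fun x => x < N) s.
Proof.
elim: k s => [|k IH] [|x s] //=.
  apply/allpairsP => -[[y t] /= [_ _ H]] //.
apply/allpairsP/idP => [[[y t] /= [Hy Ht [-> ->]]]|/andP [Hs /andP [Hx Ha]]].
  by move: Hy Ht; rewrite mem_iota add0n IH /= eqSS => -> /andP [-> ->].
exists (x, s); split => //=; first by rewrite mem_iota add0n.
by rewrite IH -eqSS Hs.
Qed.

Lemma uniq_words k N : uniq (words k N).
Proof.
elim: k => [|k IH] //=; apply: allpairs_uniq => //; first exact: iota_uniq.
by move=> [x s] [y t] _ _ /= [-> ->].
Qed.

Lemma sum_words_cons k N (F : seq nat -> nat) :
  \sum_(s <- words k.+1 N) F s = \sum_(x <- iota 0 N) \sum_(s <- words k N) F (x :: s).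
Proof. by rewrite /= big_allpairs_dep. Qed.

Lemma sum_words_cat a c N (F : seq nat -> nat) :
  \sum_(s <- words (a + c) N) F s =
  \sum_(s1 <- words a N) \sum_(s2 <- words c N) F (s1 ++ s2).
Proof.
elim: a F => [|a IH] F; first by rewrite /= big_seq1.
rewrite addSn sum_words_cons sum_words_cons.
by apply: eq_bigr => x _; rewrite IH.
Qed.

Lemma count_bij (T1 T2 : eqType) (L1 : seq T1) (L2 : seq T2) (P1 : pred T1)
  (P2 : pred T2) (g : T2 -> T1) :
  uniq L1 -> uniq L2 ->
  (forall x, x \in L2 -> P2 x -> g x \in L1 /\ P1 (g x)) ->
  (forall y, y \in L1 -> P1 y -> exists2 x, (x \in L2) && P2 x & g x = y) ->
  (forall x1 x2, x1 \in L2 -> P2 x1 -> x2 \in L2 -> P2 x2 -> g x1 = g x2 -> x1 = x2) ->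
  count P1 L1 = count P2 L2.
Proof.
move=> U1 U2 Hf Hb Hi; rewrite -!size_filter -(size_map g).
apply: perm_size; apply: uniq_perm.
- exact: filter_uniq.
- rewrite map_inj_in_uniq ?filter_uniq // => x1 x2.
  rewrite !mem_filter => /andP [H1 H1'] /andP [H2 H2']; exact: Hi.
- move=> y; rewrite mem_filter; apply/andP/mapP => [[Hy Hy']|[x Hx ->]].
    case: (Hb y Hy' Hy) => x Hx <-; exists x => //; by rewrite mem_filter andbC.
  move: Hx; rewrite mem_filter => /andP [H1 H2]; case: (Hf x H2 H1) => -> ->; done.
Qed.

Lemma card_count (T : finType) (p : pred T) : #|[set x | p x]| = count p (enum T).
Proof.
rewrite cardsE cardE -size_filter /enum_mem size_filter.
by rewrite /enum_mem (@eq_filter _ (mem T) predT) // filter_predT size_filter.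
Qed.

Lemma val_pmap_insub N (s : seq nat) : all (fun x => x < N) s ->
  map val (pmap (insub : nat -> option 'I_N) s) = s.
Proof.
elim: s => [|x s IH] //= /andP [Hx Hs].
by rewrite insubT /= IH.
Qed.

Lemma card_words k N (P : pred (seq nat)) :
  #|[set t : k.-tuple 'I_N | P (map val t)]| = count P (words k N).
Proof.
rewrite card_count; symmetry.
apply: (@count_bij _ _ _ _ _ _ (fun t : k.-tuple 'I_N => map val (tval t))).
- exact: uniq_words.
- exact: enum_uniq.
- move=> t _ Ht; split => //; rewrite mem_words size_map size_tuple eqxx /=.
  by apply/allP => x /mapP [i _ ->].
- move=> y; rewrite mem_words => /andP [/eqP Hy Ha] Py.
  have Hs : size (pmap (insub : nat -> option 'I_N) y) == k.
    by rewrite size_pmap_sub (eq_in_count (a2 := predT)) ?count_predT ?Hy // => x /(allP Ha).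
  exists (Tuple Hs); first by rewrite mem_enum /= val_pmap_insub.
  by rewrite /= val_pmap_insub.
- move=> x1 x2 _ _ _ _ /(inj_map val_inj) H; exact: val_inj.
Qed.

Definition Hpred (b : nat) (w : seq nat) : bool :=
  let u := filter (fun x => x <= b) w in
  [&& all (fun x => 0 < x) w, ~~ contains010 w, sorted leq u &
      ((u != [::]) && (seqmax u == b)) || ((u == [::]) && (b == 0))].

Lemma h_countE a b : h_count a b = count (Hpred b) (words a b.+2).
Proof. exact: (card_words a b.+2 (Hpred b)). Qed.

Definition Wt t m f (w : seq nat) : bool :=
  [&& all (fun x => x <= m) w, ~~ tri P010 w, ~~ pairs (Dm m) w,
      all (fun c => ~~ badv t c) w & forb t + 1 + count (Ew m w) (Aset t m) == f].

Lemma count_lt_iota M K : M <= K -> count (fun s => s < M) (iota 0 K) = M.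
Proof.
move=> HMK; rewrite (count_iota_ext (B := M)) //.
by rewrite (eq_in_count (a2 := predT)) ?count_predT ?size_iota // => x; rewrite mem_iota.
Qed.

Lemma sorted_filter_pairs b u : sorted leq (filter (fun x => x <= b) u) =
  ~~ pairs (fun x y => (x <= b) && (y < x)) u.
Proof.
rewrite sorted_pairwise; last exact: leq_trans.
elim: u => [|x u IH] //=; case: ifP => Hx /=; rewrite IH ?negb_or; last first.
  by rewrite (@eq_has _ _ pred0) ?has_pred0 // => y /=; rewrite Hx.
congr andb; rewrite all_filter -all_predC; apply: eq_all => y /=.
case: (leqP y b) => Hy /=; first by rewrite -leqNgt.
by rewrite -leqNgt ltnW // (leq_ltn_trans Hx Hy).
Qed.

Section Key.
Variables (t : seq nat) (m f : nat).
Hypotheses (Hm : 0 < m) (Ht : all (fun x => x < m) t) (Hat : avoids_P t)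
  (Hif : forb t < f) (Hfm : f <= m.+1).

Local Notation A := (Aset t m).
Variable b : nat.
Hypothesis Hbdef : b = f - forb t - 1.

Lemma seqmax_t : seqmax t < m.
Proof.
rewrite -(prednK Hm) ltnS seqmax_le; apply/allP => y Hy.
by rewrite -ltnS (prednK Hm) (allP Ht).
Qed.

Lemma badv_m : badv t m = false.
Proof. by apply/negP => /badv_le; rewrite leqNgt seqmax_t. Qed.

Lemma sizeA : size A = m - forb t.
Proof.
have H := count_predC (badv t) (iota 0 m).
rewrite size_iota -(forbE2 Hat seqmax_t) in H.
rewrite /Aset size_filter -H; apply/eqP; rewrite -(eqn_add2l (forb t)) subnKC.
  by rewrite H; apply/eqP.
by rewrite -H leq_addr.
Qed.

Lemma b_le : b <= size A.
Proof. rewrite sizeA; lia. Qed.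

Lemma sortA : sorted ltn A.
Proof. apply: sorted_filter; [exact: ltn_trans | exact: iota_ltn_sorted]. Qed.

Lemma uniqA : uniq A.
Proof. apply: sorted_uniq sortA; [exact: ltn_trans | exact: ltnn]. Qed.

Lemma memA x : (x \in A) = (x < m) && ~~ badv t x.
Proof. by rewrite mem_filter mem_iota add0n andbC. Qed.

Lemma nthA_lt i j : i < size A -> j < size A -> (nth 0 A i < nth 0 A j) = (i < j).
Proof.
move=> Hi Hj; case: (ltngtP i j) => H.
- by apply: (sorted_ltn_nth ltn_trans 0 sortA).
- apply/negbTE; rewrite -leqNgt; apply: ltnW.
  by apply: (sorted_ltn_nth ltn_trans 0 sortA).
- by rewrite H ltnn.
Qed.

Lemma nthA_m i : i < size A -> nth 0 A i < m.
Proof. by move=> Hi; have := mem_nth 0 Hi; rewrite memA => /andP []. Qed.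

Lemma nthA_ok i : i < size A -> ~~ badv t (nth 0 A i).
Proof. by move=> Hi; have := mem_nth 0 Hi; rewrite memA => /andP []. Qed.

Definition R k := if k <= b then nth 0 A k.-1 else m.
Definition inS k := (0 < k) && (k <= b.+1).

Lemma R_lt k l : inS k -> inS l -> (R k < R l) = (k < l).
Proof.
case: k => [|k] //; case: l => [|l] // /andP [_ Hk] /andP [_ Hl]; rewrite /R.
have Hb := b_le.
case: (leqP k.+1 b) => Hkb; case: (leqP l.+1 b) => Hlb.
- by rewrite (nthA_lt (leq_trans Hkb Hb) (leq_trans Hlb Hb)) ltnS.
- rewrite nthA_m; last exact: leq_trans Hkb Hb.
  by symmetry; exact: (leq_ltn_trans Hkb Hlb).
- rewrite ltnNge ltnW ?nthA_m //; last exact: leq_trans Hlb Hb.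
  symmetry; apply/negbTE; rewrite -leqNgt.
  exact: ltnW (leq_ltn_trans Hlb Hkb).
- have -> : k = l.
    have H1 : k <= l by rewrite -ltnS (leq_trans Hk Hlb).
    have H2 : l <= k by rewrite -ltnS (leq_trans Hl Hkb).
    by apply/eqP; rewrite eqn_leq H1 H2.
  by rewrite !ltnn.
Qed.

Lemma R_eq k l : inS k -> inS l -> (R k == R l) = (k == l).
Proof.
move=> Hk Hl; rewrite eqn_leq [R k <= R l]leqNgt [R l <= R k]leqNgt !R_lt //.
by rewrite -!leqNgt -eqn_leq.
Qed.

Lemma R_ltm k : inS k -> (R k < m) = (k <= b).
Proof.
move=> /andP [Hk0 Hk]; rewrite /R; case: (leqP k b) => Hkb; last by rewrite ltnn.
by rewrite nthA_m //; have := b_le; lia.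
Qed.

Lemma R_lem k : R k <= m.
Proof.
rewrite /R; case: (leqP k b) => Hkb //.
case: (ltnP k.-1 (size A)) => H; first by rewrite ltnW ?nthA_m.
by rewrite nth_default.
Qed.

Lemma R_ok k : inS k -> ~~ badv t (R k).
Proof.
move=> /andP [Hk0 Hk]; rewrite /R; case: (leqP k b) => Hkb; last by rewrite badv_m.
by apply: nthA_ok; have := b_le; lia.
Qed.

Definition mx (u : seq nat) := \max_(x <- u | x <= b) x.

Lemma mx_le u : mx u <= b.
Proof. by apply/bigmax_leqP_seq => i _. Qed.

Lemma lt_mx s u : (s < mx u) = has (fun k => (s < k) && (k <= b)) u.
Proof.
elim: u => [|x u IH]; first by rewrite /mx big_nil.
rewrite /mx big_cons /= -/(mx u) -IH.
by case: (leqP x b) => Hx; rewrite ?leq_max ?andbT ?andbF.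
Qed.

Lemma HAe : A = map (nth 0 A) (iota 0 (size A)).
Proof. by rewrite map_nth_iota0 // take_size. Qed.

Lemma countEw u : all inS u -> count (Ew m (map R u)) A = mx u.
Proof.
move=> /allP Hu.
rewrite {1}HAe count_map -(@count_lt_iota (mx u) (size A)); last first.
  exact: leq_trans (mx_le u) b_le.
apply: eq_in_count => s; rewrite mem_iota add0n => /= Hs.
rewrite lt_mx /Ew has_map; apply: eq_in_has => k /Hu Hk /=.
rewrite R_ltm //; case: (leqP k b) => Hkb; rewrite ?andbT ?andbF //.
move: Hk => /andP [Hk0 _].
rewrite /R Hkb leqNgt nthA_lt //; [lia|]; have := b_le; lia.
Qed.

Lemma Hpred_eq u : all inS u -> Hpred b u = Wt t m f (map R u).
Proof.
move=> Hu.
have E1 : all (fun x => x <= m) (map R u).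
  by rewrite all_map; apply/allP => k _; exact: R_lem.
have E2 : all (fun c => ~~ badv t c) (map R u).
  rewrite all_map; apply/allP => k Hk; exact: R_ok (allP Hu k Hk).
have E3 : tri P010 (map R u) = tri P010 u.
  rewrite tri_map; apply: eq_in_tri => x y z Hx Hy Hz.
  by rewrite /P010 R_eq ?R_lt //; apply: (allP Hu).
have E4 : pairs (Dm m) (map R u) = pairs (fun x y => (x <= b) && (y < x)) u.
  rewrite pairs_map; apply: eq_in_pairs => x y Hx Hy.
  by rewrite /Dm R_ltm ?R_lt //; apply: (allP Hu).
have E5 : (forb t + 1 + count (Ew m (map R u)) A == f) = (mx u == b).
  rewrite countEw //; apply/eqP/eqP; lia.
have E6 : all (fun x => 0 < x) u.
  by apply/allP => x Hx; have /andP [] := allP Hu x Hx.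
rewrite /Hpred /Wt E1 E2 E3 E4 E5 E6 c010E sorted_filter_pairs /=.
congr [&& _, _ & _].
rewrite /seqmax big_filter -/(mx u).
case: eqP => [Hn|Hn] /=.
  have -> : mx u = 0.
    by rewrite /mx -big_filter Hn big_nil.
  by rewrite eq_sym.
by rewrite ?orbF ?andbF ?andbT.
Qed.

Definition G x := if x == m then b.+1 else (index x A).+1.

Lemma GR k : inS k -> G (R k) = k.
Proof.
move=> Hk; have := Hk => /andP [Hk0 Hkb']; rewrite /G.
case: (leqP k b) => Hkb.
  have Hs : k.-1 < size A by have := b_le; lia.
  have Hr : R k = nth 0 A k.-1 by rewrite /R Hkb.
  rewrite Hr (ltn_eqF (nthA_m Hs)) index_uniq //; [lia | exact: uniqA].
by rewrite /R leqNgt Hkb eqxx; lia.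
Qed.

Lemma Wt_count w : Wt t m f w -> count (Ew m w) A = b.
Proof. by case/and5P => _ _ _ _ /eqP H; lia. Qed.

Lemma idx_lt w x : Wt t m f w -> x \in w -> x < m -> index x A < b.
Proof.
move=> Hw Hx Hxm.
have HxA : x \in A.
  rewrite memA Hxm /=; case/and5P: Hw => _ _ _ /allP H _; exact: H.
have Hidx : index x A < size A by rewrite index_mem.
rewrite -(Wt_count Hw) [X in count _ X]HAe count_map.
apply: leq_trans (_ : count (fun s => s < (index x A).+1) (iota 0 (size A)) <= _).
  by rewrite count_lt_iota.
apply: sub_count => s /= Hs; rewrite /Ew; apply/hasP; exists x => //.
rewrite Hxm andbT; rewrite -(nth_index 0 HxA).
case: (ltngtP s (index x A)) Hs => [H _|H Hs'|H _].
- apply: ltnW; rewrite nthA_lt //; exact: ltn_trans H Hidx.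
- by move: Hs'; rewrite ltnS leqNgt H.
- by rewrite H.
Qed.

Lemma RG w x : Wt t m f w -> x \in w -> R (G x) = x.
Proof.
move=> Hw Hx; rewrite /G; case: eqP => [->|/eqP Hne].
  by rewrite /R ltnn.
have Hxm : x < m.
  case/and5P: Hw => /allP H _ _ _ _; by rewrite ltn_neqAle Hne H.
have HxA : x \in A.
  rewrite memA Hxm /=; case/and5P: Hw => _ _ _ /allP H _; exact: H.
by rewrite /R (idx_lt Hw Hx Hxm) /= nth_index.
Qed.

Lemma G_inS w x : Wt t m f w -> x \in w -> inS (G x).
Proof.
move=> Hw Hx; rewrite /inS /G; case: eqP => [_|/eqP Hne] //=.
have Hxm : x < m.
  case/and5P: Hw => /allP H _ _ _ _; by rewrite ltn_neqAle Hne H.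
by rewrite ltnS (ltnW (idx_lt Hw Hx Hxm)).
Qed.

Lemma key_count c N : m < N -> count (Wt t m f) (words c N) = h_count c b.
Proof.
move=> HN; rewrite h_countE.
have inS_of : forall u, u \in words c b.+2 -> Hpred b u -> all inS u.
  move=> u; rewrite mem_words => /andP [_ /allP Hl] /and4P [/allP Hp _ _ _].
  by apply/allP => x Hx; rewrite /inS Hp //= -ltnS Hl.
apply: (@count_bij _ _ _ _ _ _ (map R)).
- exact: uniq_words.
- exact: uniq_words.
- move=> u Hu Hh; have HS := inS_of u Hu Hh; split; last by rewrite -Hpred_eq.
  move: Hu; rewrite !mem_words size_map => /andP [-> _] /=.
  by rewrite all_map; apply/allP => k _ /=; apply: leq_ltn_trans (R_lem k) HN.
- move=> w Hw HW; exists (map G w).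
    have HS : all inS (map G w).
      by rewrite all_map; apply/allP => x Hx; exact: G_inS HW Hx.
    have HRG : map R (map G w) = w.
      by rewrite -map_comp; apply: map_id_in => x Hx; exact: RG HW Hx.
    apply/andP; split; last by rewrite Hpred_eq // HRG.
    move: Hw; rewrite !mem_words size_map => /andP [-> _] /=.
    by apply/allP => x /(allP HS) /andP [_]; rewrite ltnS.
  by rewrite -map_comp; apply: map_id_in => x Hx; exact: RG HW Hx.
- move=> u1 u2 H1 P1 H2 P2 E.
  have HS1 := inS_of _ H1 P1; have HS2 := inS_of _ H2 P2.
  have K : forall u, all inS u -> map G (map R u) = u.
    by move=> u /allP Hu; rewrite -map_comp; apply: map_id_in => k /Hu /GR.
  by rewrite -(K _ HS1) E K.
Qed.

End Key.

Definition Qp m f (s : seq nat) :=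
  [&& is_invseq s, avoids_P s, seqmax s == m & forb s == f].
Definition Tcond m (t : seq nat) :=
  [&& is_invseq t, avoids_P t, all (fun x => x < m) t & m <= size t].

Lemma i_countE n m f : i_count n m f = count (Qp m f) (words n n).
Proof. exact: (card_words n n (Qp m f)). Qed.

Lemma seqmax_split t m w : all (fun x => x < m) t -> all (fun x => x <= m) w ->
  seqmax (t ++ m :: w) = m.
Proof.
move=> Ht Hw.
have H1 : all (fun x => x <= m) t.
  by apply/allP => x Hx; apply: ltnW; exact: (allP Ht).
have H2 : m <= seqmax (t ++ m :: w).
  by apply: mem_le_seqmax; rewrite mem_cat inE eqxx orbT.
apply/eqP; rewrite eqn_leq H2 andbT seqmax_le all_cat /= leqnn Hw H1.
done.
Qed.

Lemma Qsplit m f t w : 0 < m -> m \notin t ->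
  Qp m f (t ++ m :: w) = Tcond m t && Wt t m f w.
Proof.
move=> Hm Hnt.
case Hw: (all (fun x => x <= m) w); last first.
  rewrite /Wt Hw !andbF /Qp.
  case: eqP => [Hmx|_]; last by rewrite !andbF.
  by move: (leqnn m); rewrite -{1}Hmx seqmax_le all_cat /= Hw !andbF.
case Ht: (all (fun x => x < m) t); last first.
  rewrite /Tcond Ht /= !andbF /Qp.
  case: eqP => [Hmx|_]; last by rewrite !andbF.
  move: (leqnn m); rewrite -{1}Hmx seqmax_le all_cat => /andP [Ht' _].
  suff H : all (fun x => x < m) t by rewrite H in Ht.
  apply/allP => x Hx; rewrite ltn_neqAle (allP Ht' x Hx) andbT.
  by apply/negP => /eqP Hxm; rewrite -Hxm Hx in Hnt.
rewrite /Qp /Tcond /Wt invseqE invf_cat /= add0n Ht Hw seqmax_split // eqxx.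
case Hms: (m <= size t); rewrite ?andbF //= ?andbT.
rewrite (@invf_all (size t).+1 w); last first.
  by apply/allP => x Hx; apply: leq_trans (allP Hw x Hx) (leqW Hms).
rewrite invseqE andbT.
have Hsplit := avoids_split Ht Hw.
case Ha: (avoids_P t); last by rewrite Hsplit Ha /= !andbF.
apply/idP/idP.
- case/and3P => Hi Has /eqP Hf.
  move: (Has); rewrite Hsplit Ha /= => /and3P [H1 H2 H3].
  by rewrite Hi H1 H2 H3 /= -Hf (forb_split Hm Ht Hw Ha Has).
- case/and5P => Hi H1 H2 H3 /eqP Hf.
  have Has : avoids_P (t ++ m :: w) by rewrite Hsplit Ha H1 H2 H3.
  move: Hi; rewrite andbT => Hi.
  by rewrite Hi Has (forb_split Hm Ht Hw Ha Has) Hf eqxx.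
Qed.

Lemma sum_pick K a (F : nat -> nat) :
  \sum_(0 <= i < K) ((a == i) * F i) = (a < K) * F a.
Proof.
elim: K => [|K IH]; first by rewrite big_geq.
have E : (a < K.+1) = (a < K) || (a == K) by rewrite ltnS leq_eqVlt orbC.
rewrite big_nat_recr //= IH E.
by case: (ltngtP a K) => H /=; rewrite ?mul1n ?mul0n ?addn0 ?add0n // H.
Qed.

Lemma sum_iota_pick n m (F : nat -> nat) : m < n ->
  \sum_(x <- iota 0 n) ((x == m) * F x) = F m.
Proof.
move=> Hmn; have := sum_pick n m F; rewrite Hmn mul1n => <-.
rewrite /index_iota subn0; by apply: eq_bigr => x _; rewrite eq_sym.
Qed.

Lemma words_bound k N N' (P : pred (seq nat)) : N <= N' ->
  (forall s, size s = k -> P s -> all (fun x => x < N) s) ->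
  count P (words k N) = count P (words k N').
Proof.
move=> HN HP; apply: (@count_bij _ _ _ _ _ _ id).
- exact: uniq_words.
- exact: uniq_words.
- move=> s; rewrite !mem_words => /andP [Hs Ha] Ps; split => //.
  by rewrite Hs (HP s (eqP Hs) Ps).
- move=> s; rewrite mem_words => /andP [Hs Ha] Ps; exists s => //.
  rewrite mem_words Hs Ps /= andbT; apply/allP => x Hx.
  apply: (leq_trans _ HN); exact: (allP Ha).
- by [].
Qed.

Lemma all_lt_seqmax m s : 0 < m -> all (fun x => x < m) s = (seqmax s < m).
Proof.
move=> Hm; rewrite -(prednK Hm) ltnS seqmax_le; apply: eq_all => x.
by rewrite -(prednK Hm) ltnS.
Qed.

Definition gh f c i := if i < f then h_count c (f - i - 1) else 0.

Lemma tau_term m f n c t : 0 < m -> m < n -> f <= m.+1 ->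
  \sum_(w <- words c n) (((m \notin t) && Qp m f (t ++ m :: w)) : nat) =
  Tcond m t * gh f c (forb t).
Proof.
move=> Hm Hmn Hf.
case Hmt: (m \in t) => /=.
  rewrite big1 // /Tcond.
  suff -> : all (fun x => x < m) t = false by rewrite !andbF.
  by apply/negbTE/negP => /allP /(_ m Hmt); rewrite ltnn.
rewrite (eq_bigr (fun w => (Tcond m t && Wt t m f w) : nat)); last first.
  by move=> w _; rewrite Qsplit // Hmt.
under eq_bigr do rewrite -mulnb.
rewrite -big_distrr /= -countE.
case HT: (Tcond m t); rewrite ?mul0n ?mul1n //.
move: HT => /and4P [_ Hat Ht _].
rewrite /gh; case: ltnP => Hif.
  exact: (key_count Hm Ht Hat Hif Hf erefl c Hmn).
rewrite (eq_in_count (a2 := pred0)) ?count_pred0 // => w _ /=.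
apply/negP => /and5P [_ _ _ _ /eqP Hfe]; move: Hif; rewrite -Hfe; lia.
Qed.

Lemma tau_decomp m f c t : 0 < m ->
  Tcond m t * gh f c (forb t) =
  (m <= size t) * \sum_(0 <= i < f) \sum_(0 <= j < m) Qp j i t * h_count c (f - i - 1).
Proof.
move=> Hm.
set B := is_invseq t && avoids_P t.
have E1 : forall i, \sum_(0 <= j < m) Qp j i t * h_count c (f - i - 1) =
   (seqmax t < m) * ((B && (forb t == i)) * h_count c (f - i - 1)).
  move=> i.
  transitivity (\sum_(0 <= j < m) ((seqmax t == j) *
      ((B && (forb t == i)) * h_count c (f - i - 1)))); last first.
    exact: (sum_pick m (seqmax t) (fun=> (B && (forb t == i)) * h_count c (f - i - 1))).
  apply: eq_bigr => j _.
  rewrite /Qp /B mulnA; congr (_ * _); rewrite !mulnb.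
  by case: (is_invseq t); case: (avoids_P t); case: (seqmax t == j); case: (forb t == i).
under eq_bigr do rewrite E1.
rewrite -big_distrr /=.
have E2 : \sum_(0 <= i < f) ((B && (forb t == i)) * h_count c (f - i - 1)) =
   B * ((forb t < f) * h_count c (f - forb t - 1)).
  rewrite -(sum_pick f (forb t) (fun i => h_count c (f - i - 1))) big_distrr /=.
  apply: eq_bigr => i _.
  by case: (B) => /=; rewrite ?mul1n ?mul0n.
rewrite E2 /Tcond /gh all_lt_seqmax // /B.
by case: (is_invseq t); case: (avoids_P t); case: (seqmax t < m); case: (m <= size t);
  case: (forb t < f); rewrite /= ?mul0n ?mul1n ?muln0 ?muln1.
Qed.

Definition U n m f p :=
  \sum_(0 <= i < f) \sum_(0 <= j < m) i_count p j i * h_count (n - p - 1) (f - i - 1).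

Lemma term_tau n m f p t : 0 < m -> m < n -> f <= m.+1 -> size t = p ->
  \sum_(s2 <- words (n - p - 1).+1 n)
     Qp m f (t ++ s2) * ((index m (t ++ s2) == p) * 1) =
  (m <= p) * \sum_(0 <= i < f) \sum_(0 <= j < m) Qp j i t * h_count (n - p - 1) (f - i - 1).
Proof.
move=> Hm Hmn Hf Ht.
set c := n - p - 1.
rewrite sum_words_cons.
rewrite (eq_bigr (fun x => (x == m) * \sum_(w <- words c n)
           (((m \notin t) && Qp m f (t ++ m :: w)) : nat))); last first.
  move=> x _; rewrite big_distrr /=; apply: eq_bigr => w _.
  rewrite index_cat muln1.
  case Hmt: (m \in t) => /=.
    rewrite (_ : (index m t == p) = false) ?muln0 //.
    by apply/negbTE; rewrite neq_ltn -Ht index_mem Hmt.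
  rewrite -Ht -{2}(addn0 (size t)) eqn_add2l.
  have [->|Hxm] := eqVneq x m; first by rewrite eqxx /= muln1 mul1n.
  by rewrite /= muln0 mul0n.

rewrite sum_iota_pick // tau_term // tau_decomp // Ht.
done.
Qed.

Lemma count_tau p n j i : p <= n -> count (Qp j i) (words p n) = i_count p j i.
Proof.
move=> Hpn; rewrite i_countE; symmetry; apply: words_bound => // s Hs.
by case/and4P; rewrite invseqE => /invf_bound; rewrite add0n Hs.
Qed.

Lemma p_term n m f p : 0 < m -> m < n -> f <= m.+1 -> p < n ->
  \sum_(s <- words n n) Qp m f s * ((index m s == p) * 1) = (m <= p) * U n m f p.
Proof.
move=> Hm Hmn Hf Hpn.
have Hnp : n = p + (n - p - 1).+1 by lia.
have -> : words n n = words (p + (n - p - 1).+1) n by rewrite -Hnp.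
rewrite sum_words_cat.
rewrite (eq_big_seq (fun t => (m <= p) * \sum_(0 <= i < f) \sum_(0 <= j < m)
    Qp j i t * h_count (n - p - 1) (f - i - 1))); last first.
  move=> t; rewrite mem_words => /andP [/eqP Ht _]; exact: term_tau.
rewrite -big_distrr /=; congr (_ * _).
rewrite /U exchange_big; apply: eq_bigr => i _.
rewrite exchange_big; apply: eq_bigr => j _.
by rewrite -big_distrl /= -countE count_tau // ltnW.
Qed.

Unset Implicit Arguments.

Theorem mainTheorem10 (n m f : nat) :
  1 <= n -> 1 <= m -> f <= m.+1 ->
  i_count n m f =
  \sum_(m.+1 <= p < n.+1) \sum_(0 <= i < f) \sum_(0 <= j < m)
     i_count (p - 1) j i * h_count (n - p) (f - i - 1).
Proof.
move=> Hn Hm Hf.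
case: (leqP n m) => Hnm.
  rewrite big_geq ?ltnS // i_countE.
  rewrite (eq_in_count (a2 := pred0)) ?count_pred0 // => s.
  rewrite mem_words => /andP [/eqP Hs Ha] /=.
  apply/negP => /and4P [_ _ /eqP Hsm _].
  move: Ha; rewrite all_lt_seqmax // Hsm => H.
  by move: (leq_trans H Hnm); rewrite ltnn.
rewrite i_countE countE.
rewrite (eq_big_seq (fun s => \sum_(0 <= p < n) Qp m f s * ((index m s == p) * 1)));
  last first.
  move=> s Hs; rewrite -big_distrr /= sum_pick.
  case HQ: (Qp m f s); rewrite ?mul0n // mul1n muln1.
  move: Hs; rewrite mem_words => /andP [/eqP Hs _].
  move: HQ => /and4P [_ _ /eqP Hsm _].
  have Hms : m \in s by rewrite -Hsm seqmax_mem // Hsm.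
  by rewrite -Hs index_mem Hms.
rewrite exchange_big /=.
rewrite (eq_big_nat _ _ (F2 := fun p => (m <= p) * U n m f p)); last first.
  by move=> p /andP [_ Hp]; apply: p_term.
rewrite (big_cat_nat _ (n := m)) //=; last exact: ltnW.
rewrite big1_seq ?add0n; last first.
  by move=> p /andP [_]; rewrite mem_index_iota => /andP [_ Hp]; rewrite leqNgt Hp.
rewrite -[m.+1]addn1 -[n.+1]addn1 big_addn addnK.
apply: eq_big_nat => p /andP [Hmp Hpn].
by rewrite Hmp mul1n /U addnK subnDA.
Qed.
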